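(* Let $\mathbf{L}$ be an intermediate propositional logic with $\vdash_{\mathbf{L}}\lnot A\lor\lnot\lnot A$ (for all $A$). Then the first $\varepsilon\tau$-theorem holds for negated formulas in $\varepsilon\tau(\mathbf{L})$: whenever $\vdash_{\varepsilon\tau(\mathbf{L})}\lnot A(e_1,\dots,e_n)$ for $\varepsilon$- or $\tau$-terms $e_1,\dots,e_n$, there are $\varepsilon\tau$-free terms $t_i^j$ such that $\vdash_{\mathbf{L}}\lnot A(t_1^1,\dots,t_n^1)\lor\dots\lor\lnot A(t_1^k,\dots,t_n^k)$. In particular this holds for $\varepsilon\tau(\mathbf{KC})$ and $\varepsilon\tau(\mathbf{LC})$.
   Context: Intermediate propositional logic: contains intuitionistic, contained in classical propositional logic, closed under modus ponens and substitution. $\mathbf{KC}$ is intuitionistic logic plus $\lnot A\lor\lnot\lnot A$; $\mathbf{LC}$ is intuitionistic logic plus $(A\to B)\lor(B\to A)$. $\varepsilon\tau$-terms: $\varepsilon x\,A(x)$, $\tau x\,A(x)$. Critical formulas: $A(t)\to A(\varepsilon x\,A(x))$ and $A(\tau x\,A(x))\to A(t)$. $\vdash_{\varepsilon\tau(\mathbf{L})}B$: derivable in the quantifier-free first-order language with $\varepsilon\tau$-terms from critical formulas using substitution instances of theorems of $\mathbf{L}$ and modus ponens; $\vdash_{\mathbf{L}}$: the same without critical formulas. A term is $\varepsilon\tau$-free if it contains no $\varepsilon\tau$-terms. *)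

(* Defs.v *)
From mathcomp Require Import all_boot.
Set Implicit Arguments. Unset Strict Implicit. Unset Printing Implicit Defensive.

Inductive pform : Type :=
| PVar : nat -> pform
| PBot : pform
| PAnd : pform -> pform -> pform
| POr  : pform -> pform -> pform
| PImp : pform -> pform -> pform.

Definition PNeg (A : pform) : pform := PImp A PBot.

Fixpoint psubst (s : nat -> pform) (A : pform) : pform :=
  match A with
  | PVar n => s n
  | PBot => PBot
  | PAnd A B => PAnd (psubst s A) (psubst s B)
  | POr A B => POr (psubst s A) (psubst s B)
  | PImp A B => PImp (psubst s A) (psubst s B)
  end.

Inductive ipc_ax : pform -> Prop :=
| ipc_K  A B : ipc_ax (PImp A (PImp B A))
| ipc_S  A B C : ipc_ax (PImp (PImp A (PImp B C)) (PImp (PImp A B) (PImp A C)))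
| ipc_A1 A B : ipc_ax (PImp (PAnd A B) A)
| ipc_A2 A B : ipc_ax (PImp (PAnd A B) B)
| ipc_AI A B : ipc_ax (PImp A (PImp B (PAnd A B)))
| ipc_O1 A B : ipc_ax (PImp A (POr A B))
| ipc_O2 A B : ipc_ax (PImp B (POr A B))
| ipc_OE A B C : ipc_ax (PImp (PImp A C) (PImp (PImp B C) (PImp (POr A B) C)))
| ipc_EF A : ipc_ax (PImp PBot A).

Inductive hilbert (Ax : pform -> Prop) : pform -> Prop :=
| h_ipc A : ipc_ax A -> hilbert Ax A
| h_ax A : Ax A -> hilbert Ax A
| h_mp A B : hilbert Ax (PImp A B) -> hilbert Ax A -> hilbert Ax B.

Definition IPC : pform -> Prop := hilbert (fun _ => False).

Fixpoint peval (v : nat -> bool) (A : pform) : bool :=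
  match A with
  | PVar n => v n
  | PBot => false
  | PAnd A B => peval v A && peval v B
  | POr A B => peval v A || peval v B
  | PImp A B => peval v A ==> peval v B
  end.
Definition taut (A : pform) : Prop := forall v, peval v A.

Definition intermediate (L : pform -> Prop) : Prop :=
  [/\ (forall A, IPC A -> L A),
      (forall A, L A -> taut A),
      (forall A B, L (PImp A B) -> L A -> L B) &
      (forall s A, L A -> L (psubst s A))].

Definition KC : pform -> Prop :=
  hilbert (fun F => exists A, F = POr (PNeg A) (PNeg (PNeg A))).
Definition LC : pform -> Prop :=
  hilbert (fun F => exists A B, F = POr (PImp A B) (PImp B A)).

(* locally nameless: free variables Var x, bound variables BVar i      *)
(* (de Bruijn indices bound by Eps / Tau).                             *)
Inductive term : Type :=
| Var  : nat -> term
| BVar : nat -> term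
| Fn   : nat -> seq term -> term
| Eps  : formula -> term      (* eps x A(x), body with bound index 0 *)
| Tau  : formula -> term
with formula : Type :=
| Atom : nat -> seq term -> formula
| Bot  : formula
| And  : formula -> formula -> formula
| Or   : formula -> formula -> formula
| Imp  : formula -> formula -> formula.

Definition Neg (A : formula) : formula := Imp A Bot.

Fixpoint open_t (k : nat) (u : term) (t : term) : term :=
  match t with
  | Var x => Var x
  | BVar i => if i == k then u else BVar i
  | Fn f ts => Fn f (map (open_t k u) ts)
  | Eps A => Eps (open_f k.+1 u A)
  | Tau A => Tau (open_f k.+1 u A)
  end
with open_f (k : nat) (u : term) (A : formula) : formula :=
  match A with
  | Atom p ts => Atom p (map (open_t k u) ts)
  | Bot => Bot
  | And A B => And (open_f k u A) (open_f k u B)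
  | Or A B => Or (open_f k u A) (open_f k u B)
  | Imp A B => Imp (open_f k u A) (open_f k u B)
  end.

(* local closedness: all bound indices are below k (well-formedness at k = 0) *)
Fixpoint lc_t (k : nat) (t : term) : bool :=
  match t with
  | Var _ => true
  | BVar i => i < k
  | Fn _ ts => all (lc_t k) ts
  | Eps A => lc_f k.+1 A
  | Tau A => lc_f k.+1 A
  end
with lc_f (k : nat) (A : formula) : bool :=
  match A with
  | Atom _ ts => all (lc_t k) ts
  | Bot => true
  | And A B => lc_f k A && lc_f k B
  | Or A B => lc_f k A && lc_f k B
  | Imp A B => lc_f k A && lc_f k B
  end.

Fixpoint etfree_t (t : term) : bool :=
  match t with
  | Var _ => true
  | BVar _ => true
  | Fn _ ts => all etfree_t ts
  | Eps _ => false
  | Tau _ => false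
  end.
Fixpoint etfree_f (A : formula) : bool :=
  match A with
  | Atom _ ts => all etfree_t ts
  | Bot => true
  | And A B => etfree_f A && etfree_f B
  | Or A B => etfree_f A && etfree_f B
  | Imp A B => etfree_f A && etfree_f B
  end.

Definition is_et_term (t : term) : bool :=
  match t with Eps _ | Tau _ => true | _ => false end.

Fixpoint subst_t (s : nat -> term) (t : term) : term :=
  match t with
  | Var x => s x
  | BVar i => BVar i
  | Fn f ts => Fn f (map (subst_t s) ts)
  | Eps A => Eps (subst_f s A)
  | Tau A => Tau (subst_f s A)
  end
with subst_f (s : nat -> term) (A : formula) : formula :=
  match A with
  | Atom p ts => Atom p (map (subst_t s) ts)
  | Bot => Bot
  | And A B => And (subst_f s A) (subst_f s B)
  | Or A B => Or (subst_f s A) (subst_f s B)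
  | Imp A B => Imp (subst_f s A) (subst_f s B)
  end.

Definition sub_list (xs : seq nat) (ts : seq term) : nat -> term :=
  fun x => if x \in xs then nth (Var x) ts (index x xs) else Var x.

Fixpoint inst (s : nat -> formula) (A : pform) : formula :=
  match A with
  | PVar n => s n
  | PBot => Bot
  | PAnd A B => And (inst s A) (inst s B)
  | POr A B => Or (inst s A) (inst s B)
  | PImp A B => Imp (inst s A) (inst s B)
  end.

(* Derivability.  crit = true : |-_{et(L)} (with critical formulas);
   crit = false : |-_L (without critical formulas). *)
Inductive prov (L : pform -> Prop) (crit : bool) : formula -> Prop :=
| pr_inst (s : nat -> formula) (A : pform) :
    L A -> (forall n, lc_f 0 (s n)) -> prov L crit (inst s A)
| pr_crit_eps (B : formula) (t : term) :
    crit -> lc_f 1 B -> lc_t 0 t ->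
    prov L crit (Imp (open_f 0 t B) (open_f 0 (Eps B) B))
| pr_crit_tau (B : formula) (t : term) :
    crit -> lc_f 1 B -> lc_t 0 t ->
    prov L crit (Imp (open_f 0 (Tau B) B) (open_f 0 t B))
| pr_mp (A B : formula) :
    prov L crit (Imp A B) -> prov L crit A -> prov L crit B.

Fixpoint bigOr (Fs : seq formula) : formula :=
  match Fs with
  | [::] => Bot
  | [:: F] => F
  | F :: Fs' => Or F (bigOr Fs')
  end.

Definition first_et_thm_neg (L : pform -> Prop) : Prop :=
  forall (A : formula) (xs : seq nat) (es : seq term),
    etfree_f A -> lc_f 0 A -> uniq xs -> size es = size xs ->
    all is_et_term es -> all (lc_t 0) es ->
    prov L true (Neg (subst_f (sub_list xs es) A)) ->
    exists tss : seq (seq term),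
      0 < size tss /\
      all (fun ts => (size ts == size xs) && all etfree_t ts && all (lc_t 0) ts) tss /\
      prov L false (bigOr [seq Neg (subst_f (sub_list xs ts) A) | ts <- tss]).

(* Main.v *)
Require Import Defs.
From mathcomp Require Import all_boot.
From mathcomp Require Import boolp classical_sets.
From Stdlib Require Import ClassicalEpsilon FunctionalExtensionality Classical.
From Stdlib Require List.
Set Implicit Arguments. Unset Strict Implicit.
Notation In := List.In.

Section Lder.
Variable L : pform -> Prop.
Hypothesis LI : forall A, IPC A -> L A.
Hypothesis LMP : forall A B, L (PImp A B) -> L A -> L B.

Lemma Lax A : ipc_ax A -> L A. Proof. by move=> h; apply: LI; apply: h_ipc. Qed.

Fixpoint imps (G : seq pform) (B : pform) : pform :=
  match G with [::] => B | A :: G' => imps G' (PImp A B) end.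
Definition Lder G B := L (imps G B).

Lemma L_I A : L (PImp A A).
Proof.
apply: (LMP (A := PImp A (PImp A A))); last by apply: Lax; apply: ipc_K.
apply: (LMP (A := PImp A (PImp (PImp A A) A))); last by apply: Lax; apply: ipc_K.
by apply: Lax; apply: ipc_S.
Qed.

Lemma lift0 G P : L P -> Lder G P.
Proof.
elim: G P => [//|C G IH] P HP /=; apply: IH.
apply: LMP HP; apply: Lax; apply: ipc_K.
Qed.

Lemma lift1 G P Q : L (PImp P Q) -> Lder G P -> Lder G Q.
Proof.
elim: G P Q => [|C G IH] P Q HPQ /=; first by apply: LMP.
apply: IH.
apply: LMP; first by apply: Lax; apply: ipc_S.
apply: LMP HPQ; apply: Lax; apply: ipc_K.
Qed.

Lemma ldmp G A B : Lder G (PImp A B) -> Lder G A -> Lder G B.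
Proof.
elim: G A B => [|C G IH] A B /=; first by apply: LMP.
move=> H1 H2; apply: IH H2; apply: (lift1 (P := PImp C (PImp A B))) H1; apply: Lax; apply: ipc_S.
Qed.

Lemma lift2 G P Q R : L (PImp P (PImp Q R)) -> Lder G P -> Lder G Q -> Lder G R.
Proof. by move=> H HP HQ; apply: ldmp HQ; apply: (lift1 H HP). Qed.

Lemma lift3 G P Q R S : L (PImp P (PImp Q (PImp R S))) -> Lder G P -> Lder G Q -> Lder G R -> Lder G S.
Proof. by move=> H HP HQ HR; apply: ldmp HR; apply: (lift2 H HP HQ). Qed.

Lemma hyp G A : Lder (A :: G) A.
Proof. exact: lift0 (L_I A). Qed.

Lemma weak G C B : Lder G B -> Lder (C :: G) B.
Proof. by apply: lift1; apply: Lax; apply: ipc_K. Qed.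

Lemma impI G A B : Lder (A :: G) B -> Lder G (PImp A B).
Proof. by []. Qed.

Lemma hypIn G A : In A G -> Lder G A.
Proof.
elim: G => [//|C G IH] /= [->|h]; first exact: hyp.
by apply: weak; apply: IH.
Qed.

Lemma andI G A B : Lder G A -> Lder G B -> Lder G (PAnd A B).
Proof. by apply: lift2; apply: Lax; apply: ipc_AI. Qed.
Lemma andE1 G A B : Lder G (PAnd A B) -> Lder G A.
Proof. by apply: lift1; apply: Lax; apply: ipc_A1. Qed.
Lemma andE2 G A B : Lder G (PAnd A B) -> Lder G B.
Proof. by apply: lift1; apply: Lax; apply: ipc_A2. Qed.
Lemma orI1 G A B : Lder G A -> Lder G (POr A B).
Proof. by apply: lift1; apply: Lax; apply: ipc_O1. Qed.
Lemma orI2 G A B : Lder G B -> Lder G (POr A B).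
Proof. by apply: lift1; apply: Lax; apply: ipc_O2. Qed.
Lemma orE G A B C : Lder G (POr A B) -> Lder (A :: G) C -> Lder (B :: G) C -> Lder G C.
Proof. by move=> H H1 H2; apply: (lift3 (Lax (ipc_OE A B C)) H1 H2 H). Qed.
Lemma efq G A : Lder G PBot -> Lder G A.
Proof. by apply: lift1; apply: Lax; apply: ipc_EF. Qed.

Definition lit (v : nat -> bool) i := if v i then PVar i else PNeg (PVar i).
Fixpoint ctx v k n := match n with 0 => [::] | n'.+1 => lit v k :: ctx v k.+1 n' end.

Lemma ctx_In v k n i : k <= i < k + n -> In (lit v i) (ctx v k n).
Proof.
elim: n k => [|n IH] k /=; first by rewrite addn0; case/andP=> a b; move: (leq_ltn_trans a b); rewrite ltnn.
case/andP=> a b; case: (ltngtP k i) a => // [ki|->] _; last by left.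
right; apply: IH; rewrite ki /= addSnnS //.
Qed.

Lemma ctx_ext v w k n : (forall i, k <= i -> v i = w i) -> ctx v k n = ctx w k n.
Proof.
elim: n k => [//|n IH] k H /=; rewrite /lit H // IH // => i ki; apply: H; exact: ltnW.
Qed.

Fixpoint mv (A : pform) : nat :=
  match A with PVar n => n.+1 | PBot => 0
  | PAnd A B | POr A B | PImp A B => maxn (mv A) (mv B) end.

Lemma kalmar v m A : mv A <= m ->
  Lder (ctx v 0 m) (if peval v A then A else PNeg A).
Proof.
set G := ctx v 0 m.
elim: A => [i|| A IHA B IHB| A IHA B IHB| A IHA B IHB] /=.
- move=> h; apply: hypIn; rewrite /G; exact: (ctx_In v (i:=i)).
- by move=> _; apply: lift0; apply: L_I.
- rewrite geq_max => /andP[/IHA hA /IHB hB].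
  case: (peval v A) hA => hA; case: (peval v B) hB => hB /=.
  + by apply: andI.
  + apply: impI; apply: ldmp (weak _ hB) _; apply: andE2 (hyp _ _).
  + apply: impI; apply: ldmp (weak _ hA) _; apply: andE1 (hyp _ _).
  + apply: impI; apply: ldmp (weak _ hA) _; apply: andE1 (hyp _ _).
- rewrite geq_max => /andP[/IHA hA /IHB hB].
  case: (peval v A) hA => hA; case: (peval v B) hB => hB /=.
  + by apply: orI1.
  + by apply: orI1.
  + by apply: orI2.
  + apply: impI; apply: orE (hyp _ _) _ _.
    * apply: ldmp (weak _ (weak _ hA)) (hyp _ _).
    * apply: ldmp (weak _ (weak _ hB)) (hyp _ _).
- rewrite geq_max => /andP[/IHA hA /IHB hB].
  case: (peval v A) hA => hA; case: (peval v B) hB => hB /=.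
  + by apply: impI; apply: weak.
  + apply: impI; apply: ldmp (weak _ hB) _; apply: ldmp (hyp _ _) (weak _ hA).
  + by apply: impI; apply: weak.
  + apply: impI; apply: efq; apply: ldmp (weak _ hA) (hyp _ _).
Qed.

Lemma nn_intro G P : Lder G P -> Lder G (PNeg (PNeg P)).
Proof. move=> h; apply: impI; apply: ldmp (hyp _ _) (weak _ h). Qed.

Lemma lem_nn G p P : Lder (p :: G) (PNeg (PNeg P)) -> Lder (PNeg p :: G) (PNeg (PNeg P)) ->
  Lder G (PNeg (PNeg P)).
Proof.
move=> H1 H2; apply: impI.
have np : Lder (PNeg P :: G) (PNeg p).
  apply: impI. apply: ldmp (ldmp (weak _ (weak _ (impI H1))) (hyp _ _)) (weak _ (hyp _ _)).
apply: ldmp (ldmp (weak _ (impI H2)) np) (hyp _ _).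
Qed.

Lemma taut_nn P : taut P -> L (PNeg (PNeg P)).
Proof.
move=> tP; set m := mv P.
have R : forall k, k <= m -> forall v, Lder (ctx v k (m - k)) (PNeg (PNeg P)).
  elim=> [|k IH] km v.
  - rewrite subn0; apply: nn_intro; have := kalmar v (leqnn m); by rewrite tP.
  - have km' : k <= m by apply: ltnW.
    have e : forall w, ctx w k (m - k) = lit w k :: ctx w k.+1 (m - k.+1).
      by move=> w; rewrite subnS; case E: (m - k) => [|n]; [move: km; rewrite -subn_gt0 E|].
    pose v1 i := if i == k then true else v i.
    pose v0 i := if i == k then false else v i.
    have H1 := IH km' v1; have H0 := IH km' v0.
    rewrite e /lit /v1 eqxx in H1; rewrite e /lit /v0 eqxx in H0.
    rewrite (@ctx_ext v1 v) in H1; last by move=> i ki; rewrite /v1 gtn_eqF.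
    rewrite (@ctx_ext v0 v) in H0; last by move=> i ki; rewrite /v0 gtn_eqF.
    exact: lem_nn H1 H0.
have := R m (leqnn m) (fun _ => true); by rewrite subnn.
Qed.

Lemma nnn P : L (PNeg (PNeg (PNeg P))) -> L (PNeg P).
Proof.
move=> h; apply: (impI (G := [::])); apply: ldmp (weak _ (lift0 [::] h)) _.
apply: nn_intro; apply: hyp.
Qed.

End Lder.

Fixpoint pbigOr (Ps : seq pform) : pform :=
  match Ps with [::] => PBot | [:: P] => P | P :: Ps' => POr P (pbigOr Ps') end.
Fixpoint pconj (Ps : seq pform) : pform :=
  match Ps with [::] => PImp PBot PBot | [:: P] => P | P :: Ps' => PAnd P (pconj Ps') end.

Lemma peval_pbigOr v Ps : peval v (pbigOr Ps) = has (peval v) Ps.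
Proof. elim: Ps => [//|P [|Q Ps] IH] /=; first by rewrite orbF. by rewrite IH. Qed.
Lemma peval_pconj v Ps : peval v (pconj Ps) = all (peval v) Ps.
Proof. elim: Ps => [//|P [|Q Ps] IH] /=; first by rewrite andbT. by rewrite IH. Qed.

Section KCpart.
Variable L : pform -> Prop.
Hypothesis LI : forall A, IPC A -> L A.
Hypothesis LMP : forall A B, L (PImp A B) -> L A -> L B.
Hypothesis KCax : forall A, L (POr (PNeg A) (PNeg (PNeg A))).

Lemma demorgan G Bs : Lder L G (PNeg (pconj Bs)) -> Lder L G (pbigOr (map PNeg Bs)).
Proof.
move: G; elim: Bs => [|B Bs IH] G H /=.
  exact: (ldmp LI LMP H (lift0 LI LMP G (L_I LI LMP PBot))).
case: Bs IH H => [//|C Bs] IH H.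
apply: (orE LI LMP (lift0 LI LMP G (KCax B))).
- by apply: (orI1 LI LMP); apply: (hyp LI LMP).
- apply: (orI2 LI LMP); apply: IH.
  apply: impI; apply: (ldmp LI LMP (weak LI LMP _ (hyp LI LMP _ _))).
  apply: impI; apply: (ldmp LI LMP (weak LI LMP _ (weak LI LMP _ (weak LI LMP _ H)))).
  exact: (andI LI LMP (hyp LI LMP _ _) (weak LI LMP _ (hyp LI LMP _ _))).
Qed.

Lemma taut_disj Bs : taut (pbigOr (map PNeg Bs)) -> L (pbigOr (map PNeg Bs)).
Proof.
move=> t; apply: (demorgan (G := [::])); apply: (nnn LI LMP); apply: (taut_nn LI LMP).
move=> v; have := t v; rewrite peval_pbigOr /= peval_pconj has_map.
by rewrite implybF -has_predC; apply: sub_has => x /=; rewrite implybF.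
Qed.
End KCpart.

Section Hil.
Variable Ax : pform -> Prop.
Lemma hil_IPC A : IPC A -> hilbert Ax A.
Proof. elim=> [B h|B []|B C _ h1 _ h2]; [exact: h_ipc | exact: h_mp h1 h2]. Qed.
Lemma ipc_taut A : ipc_ax A -> taut A.
Proof.
move=> h v; case: h => * /=;
repeat match goal with |- context [peval ?w ?X] => case: (peval w X) end; by [].
Qed.
Lemma hil_taut : (forall A, Ax A -> taut A) -> forall A, hilbert Ax A -> taut A.
Proof.
move=> H A; elim=> [B h|B h|B C _ h1 _ h2]; [exact: ipc_taut|exact: H|].
move=> v; have := h1 v; have := h2 v => /= ->; done.
Qed.
Lemma hil_subst : (forall s A, Ax A -> Ax (psubst s A)) ->
  forall s A, hilbert Ax A -> hilbert Ax (psubst s A).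
Proof.
move=> H s A; elim=> [B h|B h|B C _ h1 _ h2].
- by apply: h_ipc; case: h => * /=; constructor.
- by apply: h_ax; apply: H.
- exact: h_mp h1 h2.
Qed.
Lemma hil_inter : (forall A, Ax A -> taut A) -> (forall s A, Ax A -> Ax (psubst s A)) ->
  intermediate (hilbert Ax).
Proof.
move=> H1 H2; split; [exact: hil_IPC | exact: hil_taut | exact: h_mp | exact: hil_subst].
Qed.
End Hil.

Lemma KC_inter : intermediate KC.
Proof.
apply: hil_inter.
- by move=> _ [A ->] v /=; case: (peval v A).
- by move=> s _ [A ->]; exists (psubst s A).
Qed.
Lemma LC_inter : intermediate LC.
Proof.
apply: hil_inter.
- by move=> _ [A [B ->]] v /=; case: (peval v A); case: (peval v B).
- by move=> s _ [A [B ->]]; exists (psubst s A), (psubst s B).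
Qed.
Lemma KC_KC A : KC (POr (PNeg A) (PNeg (PNeg A))).
Proof. by apply: h_ax; exists A. Qed.
Lemma LC_KC A : LC (POr (PNeg A) (PNeg (PNeg A))).
Proof.
have LI : forall A, IPC A -> LC A by case: LC_inter.
have LMP : forall A B, LC (PImp A B) -> LC A -> LC B by case: LC_inter.
have ax : LC (POr (PImp A (PNeg A)) (PImp (PNeg A) A)) by apply: h_ax; exists A, (PNeg A).
apply: (orE LI LMP (G := [::]) (lift0 LI LMP [::] ax)).
- apply: (orI1 LI LMP); apply: impI.
  exact: (ldmp LI LMP (ldmp LI LMP (weak LI LMP _ (hyp LI LMP _ _)) (hyp LI LMP _ _)) (hyp LI LMP _ _)).
- apply: (orI2 LI LMP); apply: impI.
  exact: (ldmp LI LMP (hyp LI LMP _ _) (ldmp LI LMP (weak LI LMP _ (hyp LI LMP _ _)) (hyp LI LMP _ _))).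
Qed.

Fixpoint allP (P : term -> Prop) (ts : seq term) : Prop :=
  match ts with [::] => True | t :: ts => P t /\ allP P ts end.

Section Ind.
Variables (Pt : term -> Prop) (Pf : formula -> Prop).
Hypotheses (HVar : forall x, Pt (Var x)) (HBVar : forall i, Pt (BVar i))
  (HFn : forall f ts, allP Pt ts -> Pt (Fn f ts))
  (HEps : forall B, Pf B -> Pt (Eps B)) (HTau : forall B, Pf B -> Pt (Tau B))
  (HAtom : forall p ts, allP Pt ts -> Pf (Atom p ts)) (HBot : Pf Bot)
  (HAnd : forall A B, Pf A -> Pf B -> Pf (And A B))
  (HOr : forall A B, Pf A -> Pf B -> Pf (Or A B))
  (HImp : forall A B, Pf A -> Pf B -> Pf (Imp A B)).
Fixpoint tind (t : term) : Pt t :=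
  match t return Pt t with
  | Var x => HVar x
  | BVar i => HBVar i
  | Fn f ts => HFn f ((fix go (ts : seq term) : allP Pt ts :=
       match ts return allP Pt ts with [::] => I | t :: ts => conj (tind t) (go ts) end) ts)
  | Eps B => HEps (find B)
  | Tau B => HTau (find B)
  end
with find (A : formula) : Pf A :=
  match A return Pf A with
  | Atom p ts => HAtom p ((fix go (ts : seq term) : allP Pt ts :=
       match ts return allP Pt ts with [::] => I | t :: ts => conj (tind t) (go ts) end) ts)
  | Bot => HBot
  | And A B => HAnd (find A) (find B)
  | Or A B => HOr (find A) (find B)
  | Imp A B => HImp (find A) (find B)
  end.
Lemma term_formula_ind : (forall t, Pt t) /\ (forall A, Pf A).
Proof. exact: (conj tind find). Qed.
End Ind.

Lemma allP_imp (Q R : term -> Prop) ts :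
  allP (fun t => Q t -> R t) ts -> allP Q ts -> allP R ts.
Proof. elim: ts => [//|t ts IH] /= [h1 h2] [h3 h4]; split; [exact: h1 | exact: IH]. Qed.

Lemma allP_all (b : term -> bool) ts : all b ts -> allP b ts.
Proof. by elim: ts => [//|t ts IH] /= /andP[h1 h2]; split; [|apply: IH]. Qed.

Lemma allP_map (f g : term -> term) ts : allP (fun t => f t = g t) ts -> map f ts = map g ts.
Proof. by elim: ts => [//|t ts IH] /= [h1 h2]; rewrite h1 IH. Qed.

Lemma allP_mapQ (Q : term -> Prop) (f g : term -> term) ts :
  allP (fun t => Q t -> f t = g t) ts -> allP Q ts -> map f ts = map g ts.
Proof. by move=> h1 h2; apply: allP_map; apply: allP_imp h1 h2. Qed.

Lemma allP_all2 (b : term -> bool) ts : allP b ts -> all b ts.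
Proof. by elim: ts => [//|t ts IH] /= [h1 h2]; rewrite h1 IH. Qed.

Definition good (t : term) : bool := etfree_t t && lc_t 0 t.

Definition chooseg (P : term -> Prop) : term :=
  match excluded_middle_informative (exists d, P d) with
  | left h => proj1_sig (constructive_indefinite_description P h)
  | right _ => Var 0
  end.

Lemma chooseg_spec P : (exists d, P d) -> P (chooseg P).
Proof.
move=> h; rewrite /chooseg; case: excluded_middle_informative => // h'.
exact: proj2_sig.
Qed.

Lemma chooseg_good P : (forall d, P d -> good d) -> good (chooseg P).
Proof.
move=> H; rewrite /chooseg; case: excluded_middle_informative => // h'.
apply: H; exact: proj2_sig.
Qed.

Section Eval.
Variable V : nat -> seq term -> bool.

Fixpoint ev_t (rho : nat -> term) (env : seq term) (t : term) : term :=
  match t with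
  | Var x => rho x
  | BVar i => nth (Var 0) env i
  | Fn f ts => Fn f (map (ev_t rho env) ts)
  | Eps B => chooseg (fun d => good d /\ ev_f rho (d :: env) B = true)
  | Tau B => chooseg (fun d => good d /\ ev_f rho (d :: env) B = false)
  end
with ev_f (rho : nat -> term) (env : seq term) (A : formula) : bool :=
  match A with
  | Atom p ts => V p (map (ev_t rho env) ts)
  | Bot => false
  | And A B => ev_f rho env A && ev_f rho env B
  | Or A B => ev_f rho env A || ev_f rho env B
  | Imp A B => ev_f rho env A ==> ev_f rho env B
  end.

Fixpoint fval (A : formula) : bool :=
  match A with
  | Atom p ts => V p ts
  | Bot => false
  | And A B => fval A && fval B
  | Or A B => fval A || fval B
  | Imp A B => fval A ==> fval B
  end.

Lemma ev_env :
  (forall t rho env ext, lc_t (size env) t -> ev_t rho (env ++ ext) t = ev_t rho env t) /\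
  (forall A rho env ext, lc_f (size env) A -> ev_f rho (env ++ ext) A = ev_f rho env A).
Proof.
apply: term_formula_ind => //=.
- by move=> i rho env ext h; rewrite nth_cat h.
- move=> f ts IH rho env ext h; congr Fn.
  apply: (allP_mapQ (Q := fun t => lc_t (size env) t)); last exact: allP_all.
  elim: ts IH {h} => [//|t ts IHl] /= [h1 h2]; split; last exact: IHl.
  exact: h1.
- move=> B IH rho env ext h; congr chooseg; apply: functional_extensionality => d.
  by rewrite -(IH rho (d :: env) ext).
- move=> B IH rho env ext h; congr chooseg; apply: functional_extensionality => d.
  by rewrite -(IH rho (d :: env) ext).
- move=> p ts IH rho env ext h; congr V.
  apply: (allP_mapQ (Q := fun t => lc_t (size env) t)); last exact: allP_all.
  elim: ts IH {h} => [//|t ts IHl] /= [h1 h2]; split; last exact: IHl.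
  exact: h1.
- by move=> A B IHA IHB rho env ext /andP[h1 h2]; rewrite IHA ?IHB.
- by move=> A B IHA IHB rho env ext /andP[h1 h2]; rewrite IHA ?IHB.
- by move=> A B IHA IHB rho env ext /andP[h1 h2]; rewrite IHA ?IHB.
Qed.

Lemma ev_t_closed t rho env : lc_t 0 t -> ev_t rho env t = ev_t rho [::] t.
Proof. by move=> h; have := (ev_env.1 t rho [::] env h). Qed.


Lemma ev_open :
  (forall t rho env u, lc_t (size env).+1 t -> lc_t 0 u ->
     ev_t rho env (open_t (size env) u t) = ev_t rho (rcons env (ev_t rho [::] u)) t) /\
  (forall A rho env u, lc_f (size env).+1 A -> lc_t 0 u ->
     ev_f rho env (open_f (size env) u A) = ev_f rho (rcons env (ev_t rho [::] u)) A).
Proof.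
apply: term_formula_ind => //=.
- move=> i rho env u h hu; rewrite nth_rcons; case: eqP => [->|ne].
  + by rewrite ltnn ev_t_closed.
  + have hi : i < size env by rewrite ltn_neqAle -ltnS h andbT; apply/eqP.
    by rewrite hi.
- move=> f ts IH rho env u h hu; congr Fn; rewrite -map_comp.
  apply: (allP_mapQ (Q := fun t => lc_t (size env).+1 t)); last exact: allP_all.
  elim: ts IH {h} => [//|t ts IHl] /= [h1 h2]; split; last exact: IHl.
  by move=> ht; apply: h1.
- move=> B IH rho env u h hu; congr chooseg; apply: functional_extensionality => d.
  by rewrite (IH rho (d :: env) u).
- move=> B IH rho env u h hu; congr chooseg; apply: functional_extensionality => d.
  by rewrite (IH rho (d :: env) u).
- move=> p ts IH rho env u h hu; congr V; rewrite -map_comp.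
  apply: (allP_mapQ (Q := fun t => lc_t (size env).+1 t)); last exact: allP_all.
  elim: ts IH {h} => [//|t ts IHl] /= [h1 h2]; split; last exact: IHl.
  by move=> ht; apply: h1.
- by move=> A B IHA IHB rho env u /andP[h1 h2] hu; rewrite IHA ?IHB.
- by move=> A B IHA IHB rho env u /andP[h1 h2] hu; rewrite IHA ?IHB.
- by move=> A B IHA IHB rho env u /andP[h1 h2] hu; rewrite IHA ?IHB.
Qed.

Lemma ev_subst :
  (forall t rho s env, (forall x, lc_t 0 (s x)) ->
     ev_t rho env (subst_t s t) = ev_t (fun x => ev_t rho [::] (s x)) env t) /\
  (forall A rho s env, (forall x, lc_t 0 (s x)) ->
     ev_f rho env (subst_f s A) = ev_f (fun x => ev_t rho [::] (s x)) env A).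
Proof.
apply: term_formula_ind => //=.
- by move=> x rho s env h; rewrite ev_t_closed.
- move=> f ts IH rho s env h; congr Fn; rewrite -map_comp.
  apply: allP_map; elim: ts IH => [//|t ts IHl] /= [h1 h2]; split; last exact: IHl.
  exact: h1.
- move=> B IH rho s env h; congr chooseg; apply: functional_extensionality => d.
  by rewrite (IH rho s (d :: env)).
- move=> B IH rho s env h; congr chooseg; apply: functional_extensionality => d.
  by rewrite (IH rho s (d :: env)).
- move=> p ts IH rho s env h; congr V; rewrite -map_comp.
  apply: allP_map; elim: ts IH => [//|t ts IHl] /= [h1 h2]; split; last exact: IHl.
  exact: h1.
- by move=> A B IHA IHB rho s env h; rewrite IHA ?IHB.
- by move=> A B IHA IHB rho s env h; rewrite IHA ?IHB.
- by move=> A B IHA IHB rho s env h; rewrite IHA ?IHB.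
Qed.

Lemma ev_etfree :
  (forall t rho env, etfree_t t -> lc_t 0 t -> ev_t rho env t = subst_t rho t) /\
  (forall A rho env, etfree_f A -> lc_f 0 A -> ev_f rho env A = fval (subst_f rho A)).
Proof.
apply: term_formula_ind => //=.
- move=> f ts IH rho env h1 h2; congr Fn.
  apply: (allP_mapQ (Q := fun t => etfree_t t && lc_t 0 t)).
  + elim: ts IH {h1 h2} => [//|t ts IHl] /= [g1 g2]; split; last exact: IHl.
    by case/andP; apply: g1.
  + apply: allP_all; rewrite all_predI; exact/andP.
- move=> p ts IH rho env h1 h2; congr V.
  apply: (allP_mapQ (Q := fun t => etfree_t t && lc_t 0 t)).
  + elim: ts IH {h1 h2} => [//|t ts IHl] /= [g1 g2]; split; last exact: IHl.
    by case/andP; apply: g1.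
  + apply: allP_all; rewrite all_predI; exact/andP.
- by move=> A B IHA IHB rho env /andP[e1 e2] /andP[l1 l2]; rewrite IHA ?IHB.
- by move=> A B IHA IHB rho env /andP[e1 e2] /andP[l1 l2]; rewrite IHA ?IHB.
- by move=> A B IHA IHB rho env /andP[e1 e2] /andP[l1 l2]; rewrite IHA ?IHB.
Qed.

Lemma good_nth env i : all good env -> good (nth (Var 0) env i).
Proof.
move=> h; case: (ltnP i (size env)) => hi; first by move/all_nthP: h; apply.
by rewrite nth_default.
Qed.

Lemma ev_good :
  (forall t rho env, (forall x, good (rho x)) -> all good env -> good (ev_t rho env t)) /\
  (forall A : formula, True).
Proof.
apply: term_formula_ind => //=.
- by move=> i rho env _ h; apply: good_nth.
- move=> f ts IH rho env h1 h2.
  have : allP (fun t => good (ev_t rho env t)) ts.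
    elim: ts IH => [//|t ts IHl] /= [g1 g2]; split; [exact: g1 | exact: IHl].
  move/allP_all2; rewrite /good /= -all_predI all_map; exact.
- by move=> B _ rho env _ _; apply: chooseg_good => d [].
- by move=> B _ rho env _ _; apply: chooseg_good => d [].
Qed.

Lemma ev_inst rho env s A : ev_f rho env (inst s A) = peval (fun n => ev_f rho env (s n)) A.
Proof. by elim: A => //= A IHA B IHB; rewrite IHA IHB. Qed.

End Eval.

Lemma lc_subst :
  (forall t s, etfree_t t -> lc_t 0 t -> (forall x, lc_t 0 (s x)) -> lc_t 0 (subst_t s t)) /\
  (forall A s, etfree_f A -> lc_f 0 A -> (forall x, lc_t 0 (s x)) -> lc_f 0 (subst_f s A)).
Proof.
apply: term_formula_ind => //=.
- move=> f ts IH s h1 h2 h3; rewrite all_map; apply: allP_all2.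
  elim: ts IH h1 h2 => [//|t ts IHl] /= [g1 g2] /andP[e1 e2] /andP[l1 l2]; split.
  + exact: g1.
  + exact: IHl.
- move=> p ts IH s h1 h2 h3; rewrite all_map; apply: allP_all2.
  elim: ts IH h1 h2 => [//|t ts IHl] /= [g1 g2] /andP[e1 e2] /andP[l1 l2]; split.
  + exact: g1.
  + exact: IHl.
- by move=> A B IHA IHB s /andP[e1 e2] /andP[l1 l2] h; rewrite IHA ?IHB.
- by move=> A B IHA IHB s /andP[e1 e2] /andP[l1 l2] h; rewrite IHA ?IHB.
- by move=> A B IHA IHB s /andP[e1 e2] /andP[l1 l2] h; rewrite IHA ?IHB.
Qed.

Section DSec.
Local Open Scope classical_set_scope.

Lemma sound L crit (Ltaut : forall A, L A -> taut A) V F :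
  prov L crit F -> ev_f V Var [::] F = true.
Proof.
have gv : forall x, good (Var x) by [].
elim=> {F}.
- by move=> s A hA _; rewrite ev_inst; apply: Ltaut.
- move=> B t _ hB ht /=.
  have e1 := (ev_open V).2 B Var [::] t hB ht; rewrite /= in e1; rewrite e1.
  have e2 := (ev_open V).2 B Var [::] (Eps B) hB hB; rewrite /= in e2; rewrite e2.
  apply/implyP => h.
  have g := (ev_good V).1 t Var [::] gv isT.
  have [] // := @chooseg_spec (fun d => good d /\ ev_f V Var [:: d] B = true).
  by exists (ev_t V Var [::] t).
- move=> B t _ hB ht /=.
  have e1 := (ev_open V).2 B Var [::] t hB ht; rewrite /= in e1; rewrite e1.
  have e2 := (ev_open V).2 B Var [::] (Tau B) hB hB; rewrite /= in e2; rewrite e2.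
  apply/implyP => h; case E: (ev_f V Var [:: ev_t V Var [::] t] B) => //.
  have g := (ev_good V).1 t Var [::] gv isT.
  have [|_ h'] := @chooseg_spec (fun d => good d /\ ev_f V Var [:: d] B = false).
    by exists (ev_t V Var [::] t).
  by rewrite h' in h.
- by move=> A B _ h1 _ h2 /=; move: h1 => /=; rewrite h2.
Qed.

Section Compact.
Variables (X S : Type) (sat : (X -> bool) -> S -> bool) (atomsOf : S -> seq X).
Hypothesis loc : forall V W s, (forall a, List.In a (atomsOf s) -> V a = W a) -> sat V s = sat W s.
Variable Sig : S -> Prop.
Hypothesis fs : forall l : seq S, (forall s, List.In s l -> Sig s) ->
  exists V, forall s, List.In s l -> sat V s.

Definition PP (C : set (X * bool)) : Prop :=
  forall (l : seq S) (c : seq (X * bool)), (forall s, List.In s l -> Sig s) ->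
  exists V, (forall s, List.In s l -> sat V s) /\ (forall q, List.In q c -> C q -> V q.1 = q.2).

Lemma PP0 : PP set0.
Proof. move=> l c hl; have [V hV] := fs hl; by exists V; split. Qed.

Lemma compact : exists V, forall s, Sig s -> sat V s.
Proof.
have chain : forall F : set (set (X * bool)), F `<=` PP -> total_on F subset ->
    PP (\bigcup_(Y in F) Y).
  move=> F FP tot l c hl.
  have : exists Y, (F Y \/ Y = set0) /\ forall q, List.In q c -> (\bigcup_(Y in F) Y) q -> Y q.
    elim: c => [|q c [Y [hY cY]]]; first by exists set0; split; [right|].
    case: (classic ((\bigcup_(Y in F) Y) q)) => [[Z FZ Zq]|nq].
    - case: hY => [FY|Y0].
      + case: (tot _ _ FY FZ) => [YZ|ZY].
        * exists Z; split; first by left.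
          by move=> r [<-|rc] // hr; apply: YZ; apply: cY.
        * exists Y; split; first by left.
          by move=> r [<-|rc] hr; [apply: ZY | apply: cY].
      + exists Z; split; first by left.
        by move=> r [<-|rc] // hr; have := cY r rc hr; rewrite Y0.
    - exists Y; split => // r [<-|rc] hr //; exact: cY.
  move=> [Y [hY cY]].
  have PY : PP Y by case: hY => [/FP|->] //; exact: PP0.
  have [V [h1 h2]] := PY l c hl.
  by exists V; split => // q hq hb; apply: h2 => //; apply: cY.
have [A [PA maxA]] := Zorn_bigcup chain.
have claim : forall a, A (a, true) \/ A (a, false).
  move=> a; apply: NNPP => /not_or_and [n1 n0].
  have np : forall b, ~ A (a, b) -> ~ PP (fun q => A q \/ q = (a, b)).
    move=> b nb; apply: maxA; split; first by move=> q hq; left.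
    by move=> sub; apply: nb; exact: (sub (a, b) (or_intror erefl)).
  have h1 := np true n1; have h0 := np false n0.
  rewrite /PP in h1 h0.
  have [l1 [c1 [hl1 nV1]]] : exists l c, (forall s, List.In s l -> Sig s) /\
     ~ exists V, (forall s, List.In s l -> sat V s) /\
        (forall q, List.In q c -> (A q \/ q = (a, true)) -> V q.1 = q.2).
    apply: NNPP => H; apply: h1 => l c hl; apply: NNPP => H2; apply: H; by exists l, c.
  have [l0 [c0 [hl0 nV0]]] : exists l c, (forall s, List.In s l -> Sig s) /\
     ~ exists V, (forall s, List.In s l -> sat V s) /\
        (forall q, List.In q c -> (A q \/ q = (a, false)) -> V q.1 = q.2).
    apply: NNPP => H; apply: h0 => l c hl; apply: NNPP => H2; apply: H; by exists l, c.
  have hl : forall s, List.In s (l1 ++ l0) -> Sig s.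
    by move=> s hs; case: (List.in_app_or _ _ _ hs) => ?; [apply: hl1 | apply: hl0].
  have [V [hs hc]] := PA (l1 ++ l0) (c1 ++ c0) hl.
  case E: (V a).
  - apply: nV1; exists V; split.
    + by move=> s hs1; apply: hs; apply: List.in_or_app; left.
    + move=> q hq [Aq|->] //; apply: hc => //; apply: List.in_or_app; by left.
  - apply: nV0; exists V; split.
    + by move=> s hs1; apply: hs; apply: List.in_or_app; right.
    + move=> q hq [Aq|->] //; apply: hc => //; apply: List.in_or_app; by right.
pose Vs a := if excluded_middle_informative (A (a, true)) then true else false.
have AV : forall a, A (a, Vs a).
  move=> a; rewrite /Vs; case: excluded_middle_informative => // h.
  by case: (claim a).
exists Vs => s hs.
have [V [h1 h2]] := PA [:: s] [seq (a, Vs a) | a <- atomsOf s] (fun s' hs' => ltac:(case: hs' => [<-|[]] //)).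
rewrite -(@loc V) ?(h1 s) //; first by left.
move=> a ha; apply: (h2 (a, Vs a)) => //.
exact: (List.in_map (fun a => (a, Vs a))).
Qed.
End Compact.

End DSec.

Fixpoint atoms (A : formula) : seq (nat * seq term) :=
  match A with
  | Atom p ts => [:: (p, ts)]
  | Bot => [::]
  | And A B | Or A B | Imp A B => atoms A ++ atoms B
  end.

Definition eqd (x y : nat * seq term) : bool :=
  if excluded_middle_informative (x = y) then true else false.
Fixpoint idx a (l : seq (nat * seq term)) : nat :=
  match l with [::] => 0 | b :: l => if eqd a b then 0 else (idx a l).+1 end.
Lemma nth_idx a l d : List.In a l -> nth d l (idx a l) = a.
Proof.
elim: l => [//|b l IH] /= h; rewrite /eqd; case: excluded_middle_informative => [e|ne] /=; first by rewrite e.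
by apply: IH; case: h => // e; case: ne.
Qed.

Fixpoint abs ats (A : formula) : pform :=
  match A with
  | Atom p ts => PVar (idx (p, ts) ats)
  | Bot => PBot
  | And A B => PAnd (abs ats A) (abs ats B)
  | Or A B => POr (abs ats A) (abs ats B)
  | Imp A B => PImp (abs ats A) (abs ats B)
  end.
Definition sat_s ats n : formula :=
  let '(p, ts) := nth (0, [::]) ats n in if all (lc_t 0) ts then Atom p ts else Bot.

Lemma sat_s_lc ats n : lc_f 0 (sat_s ats n).
Proof. rewrite /sat_s; case: nth => p ts; by case: ifP. Qed.

Lemma In_app_l {T} (a : T) l1 l2 : List.In a l1 -> List.In a (l1 ++ l2).
Proof. by move=> h; apply: List.in_or_app; left. Qed.
Lemma In_app_r {T} (a : T) l1 l2 : List.In a l2 -> List.In a (l1 ++ l2).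
Proof. by move=> h; apply: List.in_or_app; right. Qed.

Lemma inst_abs ats A : (forall a, List.In a (atoms A) -> List.In a ats) -> lc_f 0 A ->
  inst (sat_s ats) (abs ats A) = A.
Proof.
elim: A => [p ts||A IHA B IHB|A IHA B IHB|A IHA B IHB] /= h hl //.
- rewrite /sat_s nth_idx ?hl //; apply: h; by left.
all: case/andP: hl => h1 h2; rewrite IHA ?IHB // => a ha; apply: h;
       solve [by apply: In_app_l | by apply: In_app_r].
Qed.

Lemma peval_abs ats v A : (forall a, List.In a (atoms A) -> List.In a ats) ->
  peval v (abs ats A) = fval (fun p ts => v (idx (p, ts) ats)) A.
Proof.
elim: A => [p ts||A IHA B IHB|A IHA B IHB|A IHA B IHB] /= h //;
  rewrite IHA ?IHB // => a ha; apply: h; solve [by apply: In_app_l | by apply: In_app_r].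
Qed.

Lemma fval_loc V W A : (forall a, List.In a (atoms A) -> V a.1 a.2 = W a.1 a.2) ->
  fval V A = fval W A.
Proof.
elim: A => [p ts||A IHA B IHB|A IHA B IHB|A IHA B IHB] /= h //.
- by apply: (h (p, ts)); left.
all: rewrite IHA ?IHB // => a ha; apply: h; solve [by apply: In_app_l | by apply: In_app_r].
Qed.

Lemma inst_pbigOr s Ps : inst s (pbigOr Ps) = bigOr (map (inst s) Ps).
Proof. by elim: Ps => [//|P [|Q Ps] IH] //=; rewrite IH. Qed.

Lemma hasIn {T} (b : pred T) x s : List.In x s -> b x -> has b s.
Proof. elim: s => [//|y s IH] /= [->->//|h] hb; by rewrite IH ?orbT. Qed.

Lemma hdisj L (HL : intermediate L) (KCax : forall A, L (POr (PNeg A) (PNeg (PNeg A))))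
  (Fs : seq formula) : (forall F, List.In F Fs -> lc_f 0 F) ->
  (forall V, exists F, List.In F Fs /\ fval V F = false) ->
  prov L false (bigOr (map Neg Fs)).
Proof.
case: HL => LI Ltaut LMP _ hl hV.
set ats := flatten (map atoms Fs).
have inats : forall F a, List.In F Fs -> List.In a (atoms F) -> List.In a ats.
  rewrite /ats; clear ats; elim: Fs {hl hV} => [//|G Fs IH] F a /= [->|hF] ha.
  - exact: In_app_l.
  - by apply: In_app_r; apply: IH hF ha.
set Q := pbigOr (map PNeg (map (abs ats) Fs)).
have LQ : L Q.
  apply: (taut_disj LI LMP KCax) => v; rewrite peval_pbigOr.
  have [F [hF hf]] := hV (fun p ts => v (idx (p, ts) ats)).
  apply: (hasIn (x := PNeg (abs ats F))).
  - by do 2 apply: List.in_map.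
  - by rewrite /= peval_abs ?hf // => a; apply: inats.
have := @pr_inst L false (sat_s ats) Q LQ (sat_s_lc ats).
rewrite /Q inst_pbigOr; congr (prov _ _ (bigOr _)).
clear LQ; clear Q hV; clearbody ats; move: hl inats.
elim: Fs => [//|F Fs IH] hl inats /=.
rewrite inst_abs; last by apply: hl; left.
  by rewrite IH // => [G hG|G a hG]; [apply: hl; right | apply: inats; right].
by move=> a; apply: inats; left.
Qed.

Lemma nth_all (P : pred term) ts d i : all P ts -> P d -> P (nth d ts i).
Proof.
move=> h hd; case: (ltnP i (size ts)) => hi; first by move/all_nthP: h; apply.
by rewrite nth_default.
Qed.

Lemma sub_list_lc xs ts x : all (lc_t 0) ts -> lc_t 0 (sub_list xs ts x).
Proof. by move=> h; rewrite /sub_list; case: ifP => // _; apply: nth_all. Qed.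

Lemma fval_loc' (V W : nat * seq term -> bool) s :
  (forall a, List.In a (atoms s) -> V a = W a) ->
  fval (fun p ts => V (p, ts)) s = fval (fun p ts => W (p, ts)) s.
Proof. by move=> h; apply: fval_loc => -[p ts] ha; apply: h. Qed.

Lemma main_thm L : intermediate L ->
  (forall A : pform, L (POr (PNeg A) (PNeg (PNeg A)))) -> first_et_thm_neg L.
Proof.
move=> HL KCax A xs es etA lcA uxs ses etes lces H.
have Ltaut : forall A, L A -> taut A by case: HL.
apply: NNPP => Hno.
pose gt := fun ts : seq term => (size ts == size xs) && all etfree_t ts && all (lc_t 0) ts.
pose Sig := fun F => exists ts, gt ts /\ F = subst_f (sub_list xs ts) A.
have fs : forall l : seq formula, (forall s, List.In s l -> Sig s) ->
    exists V : nat * seq term -> bool, forall s, List.In s l -> fval (fun p ts => V (p, ts)) s.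
  move=> l hl; apply: NNPP => nV.
  have [tss [gtss ltss]] : exists tss, all gt tss /\
      l = [seq subst_f (sub_list xs ts) A | ts <- tss].
    elim: l hl {nV} => [|F l IH] hl; first by exists [::].
    have [|tss [g1 e1]] := IH; first by move=> s hs; apply: hl; right.
    have [ts [g2 e2]] := hl F (or_introl erefl).
    by exists (ts :: tss); rewrite /= g1 g2 e1 e2.
  apply: Hno; exists tss; split; last split => //.
  - case: tss {gtss} ltss => // el; case: nV; exists (fun _ => true); by rewrite el.
  - move: (hdisj HL KCax (Fs := l)); rewrite ltss -map_comp; apply.
    + move=> F hF; have [ts [g e]] : Sig F by apply: hl; rewrite ltss.
      rewrite e; apply: (lc_subst.2 A _ etA lcA) => x; apply: sub_list_lc.
      by case/andP: g.
    + move=> V; apply: NNPP => nF; apply: nV; exists (fun a => V a.1 a.2) => s hs.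
      case E: (fval _ s) => //; case: nF; exists s; split; [by rewrite -ltss | exact: E].
 
have [V' hV'] := compact (sat := fun V F => fval (fun p ts => V (p, ts)) F) (atomsOf := atoms)
   (@fval_loc') fs.
pose V := fun p ts => V' (p, ts).
have := sound Ltaut V H; rewrite /= implybF => /negP; apply.
rewrite (ev_subst V).2; last by move=> x; apply: sub_list_lc.
pose vs := [seq ev_t V Var [::] e | e <- es].
have -> : (fun x => ev_t V Var [::] (sub_list xs es x)) = sub_list xs vs.
  apply: functional_extensionality => x; rewrite /sub_list; case: ifP => // hx.
  by rewrite (nth_map (Var x)) // ses index_mem.
have gvs : all good vs.
  have gen : forall es', all is_et_term es' -> all good [seq ev_t V Var [::] e | e <- es'].
    elim=> [//|e es' IH] /= /andP[he hes]; rewrite IH // andbT.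
    by case: e he => //= B _; apply: chooseg_good => d [].
  exact: gen.
have lvs : forall x, lc_t 0 (sub_list xs vs x).
  move=> x; apply: sub_list_lc; move: gvs; rewrite /good all_predI => /andP[_ //].
rewrite (ev_etfree V).2 //.
apply: (hV' (subst_f (sub_list xs vs) A)); exists vs; split => //.
rewrite /gt size_map ses eqxx /=; move: gvs; rewrite /good all_predI; done.
Qed.

Theorem mainTheorem6 :
  (forall L : pform -> Prop,
      intermediate L ->
      (forall A : pform, L (POr (PNeg A) (PNeg (PNeg A)))) ->
      first_et_thm_neg L)
  /\ first_et_thm_neg KC /\ first_et_thm_neg LC.
Proof.
split; first exact: main_thm.
split; apply: main_thm.
- exact: KC_inter.
- exact: KC_KC.
- exact: LC_inter.
- exact: LC_KC.
Qed.
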